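(* Let $A=(\Sigma,q,N,\delta)$ be a simple LQCA with $|N|=r\ge2$. Then the columns $U_A(\cdot,c)$, $c\in\mathcal C_A$, are pairwise orthogonal (i.e. $\langle U_A(\cdot,c),U_A(\cdot,c')\rangle=0$ for all $c\neq c'$) if and only if $p_1=p_2$ for every $q$-cycle $p$ of the graph $H_A$.
   Context: A linear quantum cellular automaton (LQCA) is a tuple $A=(\Sigma,q,N,\delta)$ where $\Sigma$ is a finite nonempty set of states, $N=(a_1,\dots,a_r)$ is a strictly increasing sequence of integers, $\delta:\Sigma^r\to\mathbb C^\Sigma$ satisfies $\|\delta(w)\|>0$ for all $w$, and $q\in\Sigma$ satisfies $[\delta(q,\dots,q)](x)=1$ if $x=q$ and $0$ otherwise. It is simple if $a_r-a_1=r-1$. On $\mathbb C^\Sigma$, $\langle u,v\rangle=\sum_x u(x)\overline{v(x)}$, and $u\perp v$ means $\langle u,v\rangle=0$. A configuration is a map $c:\mathbb Z\to\Sigma$ with $c_i\ne q$ for only finitely many $i$; $\mathcal C_A$ is the set of configurations. With $c_{i+N}=(c_{i+a_1},\dots,c_{i+a_r})$, $U_A(d,c)=\prod_{i\in\mathbb Z}[\delta(c_{i+N})](d_i)$; $U_A(\cdot,c)$ is the column $d\mapsto U_A(d,c)$ in $\ell_2(\mathcal C_A)$ with inner product $\langle u,v\rangle=\sum_d u(d)\overline{v(d)}$. The directed graph $H_A=(V,E)$ has $V=\Sigma^{r-1}\times\Sigma^{r-1}$ and $E=\{((x_1z_1,x_2z_2),(z_1y_1,z_2y_2)):x_1,x_2,y_1,y_2\in\Sigma,\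 z_1,z_2\in\Sigma^{r-2},\ \delta(x_1z_1y_1)\not\perp\delta(x_2z_2y_2)\}$. A path $p=((u_0,v_0),\dots,(u_k,v_k))$ in $H_A$ is a cycle if $k>0$ and $(u_0,v_0)=(u_k,v_k)$, and a $q$-cycle if moreover $(u_0,v_0)=(q^{r-1},q^{r-1})$; $p_1=(u_0,\dots,u_k)$ and $p_2=(v_0,\dots,v_k)$. *)

(* Defs.v *)
From HB Require Import structures.
From mathcomp Require Import all_boot all_order all_algebra.
From mathcomp Require Import boolp classical_sets functions cardinality fsbigop reals.
From mathcomp Require Import complex.
Set Implicit Arguments. Unset Strict Implicit. Unset Printing Implicit Defensive.
Import Order.TTheory GRing.Theory Num.Theory.
Local Open Scope ring_scope.
Local Open Scope classical_set_scope.

(* Complex numbers are modelled as R[i] for an arbitrary R : realType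
   (a complete archimedean ordered field, i.e. a model of the reals). *)

Definition dotv (R : realType) (S : finType) (u v : S -> R[i]) : R[i] :=
  \sum_(x : S) u x * (v x)^*.

(* A = (Sigma, q, N, delta) is an LQCA.  Words of Sigma^r are seqs of size r
   (r = size N); the values of delta on words of other lengths are never used. *)
Definition is_LQCA (R : realType) (S : finType) (q : S) (N : seq int)
    (delta : seq S -> S -> R[i]) : Prop :=
  [/\ N != [::],
      sorted <%R N,
      (forall w : seq S, size w = size N -> 0 < dotv (delta w) (delta w))
    & (forall x : S, delta (nseq (size N) q) x = (x == q)%:R)].

Definition is_simple (N : seq int) : Prop :=
  last 0 N - head 0 N = (size N)%:Z - 1.

Definition config (S : finType) (q : S) : set (int -> S) :=
  [set c | finite_set [set i | c i != q]].

Definition nbhd (S : finType) (N : seq int) (c : int -> S) (i : int) : seq S :=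
  map (fun a => c (i + a)) N.

Definition UA (R : realType) (S : finType) (N : seq int)
    (delta : seq S -> S -> R[i]) (d c : int -> S) : R[i] :=
  \big[*%R/1]_(i \in [set: int]) delta (nbhd N c i) (d i).

Definition col_inner (R : realType) (S : finType) (q : S) (N : seq int)
    (delta : seq S -> S -> R[i]) (c c' : int -> S) : R[i] :=
  \sum_(d \in config q) UA N delta d c * (UA N delta d c')^*.

Definition columns_orthogonal (R : realType) (S : finType) (q : S) (N : seq int)
    (delta : seq S -> S -> R[i]) : Prop :=
  forall c c' : int -> S, config q c -> config q c' -> c <> c' ->
    col_inner q N delta c c' = 0.

Definition H_edge (R : realType) (S : finType) (r : nat)
    (delta : seq S -> S -> R[i]) (u v : seq S * seq S) : Prop :=
  exists (x1 x2 y1 y2 : S) (z1 z2 : seq S),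
    [/\ size z1 = (r - 2)%N, size z2 = (r - 2)%N,
        u = (x1 :: z1, x2 :: z2), v = (rcons z1 y1, rcons z2 y2)
      & dotv (delta (x1 :: rcons z1 y1)) (delta (x2 :: rcons z2 y2)) != 0].

Definition q_vertex (S : finType) (r : nat) (q : S) : seq S * seq S :=
  (nseq (r - 1) q, nseq (r - 1) q).

Definition q_cycle (R : realType) (S : finType) (r : nat) (q : S)
    (delta : seq S -> S -> R[i]) (p : seq (seq S * seq S)) : Prop :=
  [/\ (1 < size p)%N,
      (forall i : nat, (i.+1 < size p)%N ->
         H_edge r delta (nth (q_vertex r q) p i) (nth (q_vertex r q) p i.+1)),
      nth (q_vertex r q) p 0 = q_vertex r q
    & nth (q_vertex r q) p (size p).-1 = q_vertex r q].

(* Main.v *)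
Require Import Defs.
From HB Require Import structures.
From mathcomp Require Import all_boot all_order all_algebra.
From mathcomp Require Import boolp classical_sets functions cardinality fsbigop reals.
From mathcomp Require Import complex.
From mathcomp Require Import zify.
From mathcomp Require Import finmap.
Set Implicit Arguments. Unset Strict Implicit. Unset Printing Implicit Defensive.
Import Order.TTheory GRing.Theory Num.Theory.
Local Open Scope ring_scope.
Local Open Scope classical_set_scope.

Section Win.
Variables (lo : int) (n : nat).
Definition inW (i : int) := (lo <= i < lo + n%:Z).
Definition Wf : {fset int} := [fset (lo + (nat_of_ord j)%:Z)%R | j in 'I_n]%fset.
Lemma inWf i : (i \in Wf) = inW i.
Proof.
rewrite /inW; apply/imfsetP/idP => [[j _ ->]|/andP[h1 h2]].
  have := ltn_ord j; lia.
have hn : (absz (i - lo) < n)%N by lia.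
exists (Ordinal hn) => //=; lia.
Qed.
End Win.

Section Prod.
Variables (R : realType) (S : finType) (q : S) (N : seq int) (delta : seq S -> S -> R[i]).
Hypothesis dq : forall x, delta (nseq (size N) q) x = (x == q)%:R.
Variables (lo : int) (n : nat).

Lemma UA_ext c (cout : forall i, ~~ inW lo n i -> nbhd N c i = nseq (size N) q) d : (forall i, ~~ inW lo n i -> d i = q) ->
  UA N delta d c = \prod_(j < n) delta (nbhd N c (lo + j%:Z)) (d (lo + j%:Z)).
Proof.
rewrite /UA => dout.
rewrite (fsbigTE (Wf lo n)); last first.
  by move=> i; rewrite inWf => hi; rewrite cout // dq dout // eqxx.
rewrite big_imfset /=; last first.
  by move=> j k _ _ /= h; apply/val_inj => /=; lia.
by rewrite big_enum.
Qed.

Lemma UA_zero c (cout : forall i, ~~ inW lo n i -> nbhd N c i = nseq (size N) q) d : config q d -> (exists i, ~~ inW lo n i /\ d i != q) ->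
  UA N delta d c = 0.
Proof.
rewrite /UA /config /= => fd [i0 [hi0 di0]].
have fin : finite_set ([set` Wf lo n] `|` [set i | d i != q]).
  by rewrite finite_setU; split => //; apply: finite_fset.
rewrite (fsbigTE (fset_set ([set` Wf lo n] `|` [set i | d i != q]))); last first.
  move=> i; rewrite in_fset_set // notin_setE /= => /not_orP [h1 /negP].
  rewrite negbK => /eqP ->; rewrite cout ?dq ?eqxx //.
  by rewrite -inWf; apply/negP.
rewrite (big_rem i0) /=; last first.
  by rewrite in_fset_set //; apply/mem_set; right.
by rewrite (cout _ hi0) dq (negbTE di0) mul0r.
Qed.

Definition ext (f : {ffun 'I_n -> S}) (i : int) : S :=
  if lo <= i then oapp (fun j : 'I_n => f j) q (insub (absz (i - lo))) else q.

Lemma ext_in f (j : 'I_n) : ext f (lo + j%:Z) = f j.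
Proof.
rewrite /ext lerDl lez_nat /=.
have -> : absz (lo + j%:Z - lo)%R = j by lia.
by rewrite valK.
Qed.

Lemma ext_out f i : ~~ inW lo n i -> ext f i = q.
Proof.
rewrite /ext /inW => h; case: ifP => // hl.
by rewrite insubN //; lia.
Qed.

Lemma ext_inj : injective ext.
Proof.
move=> f g h; apply/ffunP => j.
by rewrite -!ext_in h.
Qed.

Lemma col_inner_prod c c'
  (cout : forall i, ~~ inW lo n i -> nbhd N c i = nseq (size N) q)
  (c'out : forall i, ~~ inW lo n i -> nbhd N c' i = nseq (size N) q) :
  col_inner q N delta c c' =
  \prod_(j < n) dotv (delta (nbhd N c (lo + j%:Z))) (delta (nbhd N c' (lo + j%:Z))).
Proof.
rewrite /col_inner.
rewrite -(fsbig_widen (ext @` setT) (config q)); last 2 first.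
- move=> _ [f _ <-]; rewrite /config /=.
  apply: (sub_finite_set _ (finite_fset (Wf lo n))) => i /= hi.
  by rewrite /= inWf; apply/negPn/negP => /ext_out h; rewrite h eqxx in hi.
- move=> d [dc dni] /=.
  have [hall|hex] := pselect (forall i, ~~ inW lo n i -> d i = q).
    exfalso; apply: dni; exists [ffun j => d (lo + (nat_of_ord j)%:Z)] => //.
    apply/funext => i; have [hi|hi] := boolP (inW lo n i); last first.
      by rewrite ext_out // hall.
    move: hi => /andP[h1 h2].
    have hn : (absz (i - lo) < n)%N by lia.
    have -> : i = lo + (nat_of_ord (Ordinal hn))%:Z by rewrite /=; lia.
    by rewrite ext_in ffunE.
  move: hex => /existsNP [i /not_implyP [hi /eqP di]].
  by rewrite (UA_zero cout) ?mul0r //; exists i.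
rewrite fsbig_image; last by move=> f g _ _; apply: ext_inj.
rewrite (fsbigTE [fset f | f in {ffun 'I_n -> S}]%fset); last first.
  by move=> f; rewrite in_imfset.
rewrite big_imfset //= big_enum /=.
rewrite bigA_distr_bigA /=.
apply: eq_bigr => f _.
rewrite (UA_ext cout); last by move=> i; apply: ext_out.
rewrite (UA_ext c'out); last by move=> i; apply: ext_out.
rewrite rmorph_prod -big_split /=.
by apply: eq_bigr => j _; rewrite !ext_in.
Qed.
End Prod.

Lemma sorted_last_ge (x : int) (s : seq int) :
  sorted <%R (x :: s) -> (size s)%:Z <= last x s - x.
Proof.
elim: s x => [|y s IH] x /=; first by rewrite subrr.
move=> /andP[hxy hs]; have := IH y hs; lia.
Qed.

Lemma sorted_consec (x : int) (s : seq int) :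
  sorted <%R (x :: s) -> last x s - x = (size s)%:Z ->
  forall k, (k <= size s)%N -> nth 0 (x :: s) k = x + k%:Z.
Proof.
elim: s x => [|y s IH] x /=.
  by move=> _ _ [|k] //= _; rewrite addr0.
move=> /andP[hxy hs] hl [|k] hk /=; first by rewrite addr0.
have hge := sorted_last_ge hs.
have hy : y = x + 1 by lia.
rewrite (IH y hs) //; lia.
Qed.

Lemma N_consec (N : seq int) : N != [::] -> sorted <%R N -> is_simple N ->
  N = [seq head 0 N + k%:Z | k <- iota 0 (size N)].
Proof.
case: N => [//|x s] _ hs; rewrite /is_simple => hl; rewrite /= in hl.
apply: (@eq_from_nth _ 0); first by rewrite size_map size_iota.
move=> k hk; rewrite (sorted_consec hs) //; last by lia.
  by rewrite (nth_map 0%N) ?size_iota // nth_iota.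
Qed.

Definition win (S : Type) (c : int -> S) (t : int) (m : nat) : seq S :=
  [seq c (t + k%:Z) | k <- iota 0 m].

Lemma size_win S (c : int -> S) t m : size (win c t m) = m.
Proof. by rewrite size_map size_iota. Qed.

Lemma nth_win S (x0 : S) (c : int -> S) t m k : (k < m)%N ->
  nth x0 (win c t m) k = c (t + k%:Z).
Proof. by move=> hk; rewrite (nth_map 0%N) ?size_iota // nth_iota. Qed.

Lemma win_q (S : eqType) (q : S) (c : int -> S) t m :
  (forall k, (k < m)%N -> c (t + k%:Z) = q) -> win c t m = nseq m q.
Proof.
move=> h; apply: (@eq_from_nth _ q); first by rewrite size_win size_nseq.
by move=> k; rewrite size_win => hk; rewrite nth_win // nth_nseq hk h.
Qed.

Lemma win_cons S (c : int -> S) t m : win c t m.+1 = c t :: win c (t + 1) m.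
Proof.
rewrite /win /= addr0 -[in LHS](addn0 1%N) iotaDl -map_comp.
congr (_ :: _); apply: eq_map => k /=; congr c; lia.
Qed.

Lemma win_rcons S (c : int -> S) t m : win c t m.+1 = rcons (win c t m) (c (t + m%:Z)).
Proof. by rewrite /win -addn1 iotaD map_cat cats1 add0n. Qed.

Lemma nbhd_win (S : finType) (N : seq int) (c : int -> S) i :
  N = [seq head 0 N + k%:Z | k <- iota 0 (size N)] ->
  nbhd N c i = win c (i + head 0 N) (size N).
Proof.
move=> hN; rewrite /nbhd {1}hN -map_comp /win.
by apply: eq_map => k /=; rewrite addrA.
Qed.

Lemma fin_bound (A : set int) : finite_set A -> exists M : nat, forall i, A i -> (`|i| <= M)%N.
Proof.
move=> /finite_fsetP [X ->].
have : forall s : seq int, exists M : nat, forall i, i \in s -> (`|i| <= M)%N.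
  elim => [|x s [M hM]]; first by exists 0%N.
  exists (maxn `|x|%N M) => i; rewrite inE => /orP[/eqP ->|/hM h].
    by rewrite leq_maxl.
  by rewrite (leq_trans h) // leq_maxr.
move=> /(_ X) [M hM]; exists M => i /= /hM //.
Qed.

Definition sel (T : Type) (b : bool) : T * T -> T := if b then fst else snd.

Definition cyc_conf (S : Type) (q : S) (qv : seq S * seq S) (p : seq (seq S * seq S))
   (b : bool) (t : int) : S :=
  if (0 <= t) && (t < ((size p).-1)%:Z) then head q (sel b (nth qv p (absz t))) else q.

Section Main.
Variables (R : realType) (S : finType) (q : S) (N : seq int) (delta : seq S -> S -> R[i]).
Hypotheses (hL : is_LQCA q N delta) (hs : is_simple N) (hr : (2 <= size N)%N).

Lemma dq x : delta (nseq (size N) q) x = (x == q)%:R.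
Proof. by case: hL => _ _ _ ->. Qed.

Lemma nbw (c : int -> S) i : nbhd N c i = win c (i + head 0 N) (size N).
Proof. by apply: nbhd_win; case: hL => h1 h2 _ _; apply: N_consec. Qed.

Lemma dir1 : columns_orthogonal q N delta ->
  forall p, q_cycle (size N) q delta p -> map fst p = map snd p.
Proof.
move=> orth p [hsz hedge h0 hk].
have [m hm] : exists m, size N = m.+2 by exists (size N - 2)%N; lia.
have [//|neq] := eqVneq (map fst p) (map snd p).
exfalso.
have e1 : (m.+2 - 1 = m.+1)%N by lia.
have e2 : (m.+2 - 2 = m)%N by lia.
move: hedge h0 hk; rewrite hm /q_vertex e1 => hedge h0 hk.
set qv := (nseq m.+1 q, nseq m.+1 q) in hedge h0 hk.
set k := (size p).-1 in hk.
have hkp : (0 < k)%N by rewrite /k; lia.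
have hedge' : forall j, (j < k)%N -> H_edge m.+2 delta (nth qv p j) (nth qv p j.+1).
  by move=> j hj; apply: hedge; rewrite /k in hj; lia.
set cc := cyc_conf q qv p.
have hsize : forall b j, (j <= k)%N -> size (sel b (nth qv p j)) = m.+1.
  move=> b j; rewrite leq_eqVlt => /orP[/eqP ->|hj].
    by rewrite hk; case: b; rewrite /= size_nseq.
  have [x1 [x2 [y1 [y2 [z1 [z2 [hz1 hz2 hu hv _]]]]]]] := hedge' j hj.
  by rewrite hu; case: b => /=; rewrite ?hz1 ?hz2 e2.
have claim : forall b l j, (j <= k)%N -> (l < m.+1)%N ->
    nth q (sel b (nth qv p j)) l = cc b (j%:Z + l%:Z).
  move=> b; elim => [|l IH] j hj hl.
    move: hj; rewrite leq_eqVlt => /orP[/eqP ->|hj].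
      rewrite hk /cc /cyc_conf -/k.
      by rewrite /qv; case: b => /=; case: ifP => //; lia.
    rewrite /cc /cyc_conf -/k ifT; last by lia.
    by rewrite addr0 /= nth0.
  move: hj; rewrite leq_eqVlt => /orP[/eqP ->|hj].
    rewrite hk /cc /cyc_conf -/k.
    by rewrite /qv; clear IH; case: b => /=; rewrite ?nth_nseq ?if_same; case: ifP => //; lia.
  have [x1 [x2 [y1 [y2 [z1 [z2 [hz1 hz2 hu hv _]]]]]]] := hedge' j hj.
  have -> : nth q (sel b (nth qv p j)) l.+1 = nth q (sel b (nth qv p j.+1)) l.
    rewrite hu hv; clear IH; case: b => /=; rewrite nth_rcons ?hz1 ?hz2 e2 ifT //; lia.
  rewrite IH //; last by lia.
  by congr cc; lia.
have hw : forall j, (j < k)%N ->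
    dotv (delta (win (cc true) j%:Z m.+2)) (delta (win (cc false) j%:Z m.+2)) != 0.
  move=> j hj.
  have [x1 [x2 [y1 [y2 [z1 [z2 [hz1 hz2 hu hv hd]]]]]]] := hedge' j hj.
  suff hw : forall b, win (cc b) j%:Z m.+2 = sel b (x1 :: rcons z1 y1, x2 :: rcons z2 y2).
    by rewrite !hw.
  move=> b; apply: (@eq_from_nth _ q).
    by rewrite size_win; case: b => /=; rewrite size_rcons ?hz1 ?hz2 e2.
  move=> l; rewrite size_win => hl; rewrite nth_win //.
  have [hl1|hl1] := ltnP l m.+1.
    rewrite -claim //; last by lia.
    by rewrite hu; clear claim; case: b => /=; rewrite -rcons_cons nth_rcons /= ?hz1 ?hz2 e2 hl1.
  have -> : l = m.+1 by lia.
  have -> : (j%:Z + m.+1%:Z) = (j.+1%:Z + m%:Z) by lia.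
  rewrite -claim //.
  by rewrite hv; clear claim; case: b => /=; rewrite nth_rcons ?hz1 ?hz2 e2 ltnn eqxx.
have hout : forall b i, ~~ inW (- head 0 N) k i -> nbhd N (cc b) i = nseq (size N) q.
  move=> b i hi; rewrite nbw hm; apply: win_q => l hl.
  have [ht|ht] := boolP ((0 <= i + head 0 N + l%:Z) && (i + head 0 N + l%:Z < k%:Z)); last first.
    by rewrite /cc /cyc_conf -/k (negbTE ht).
  have hl2 : (absz (i + head 0 N + l%:Z)%R < m.+1)%N by move: hi ht; rewrite /inW; lia.
  have -> : i + head 0 N + l%:Z = 0%:Z + (absz (i + head 0 N + l%:Z)%R)%:Z by move: ht; lia.
  by rewrite -claim // h0 /qv; clear claim; case: b => /=; rewrite (_ : q :: nseq m q = nseq m.+1 q) // nth_nseq if_same.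
have hconf : forall b, config q (cc b).
  move=> b; rewrite /config /=.
  apply: (sub_finite_set _ (finite_fset (Wf 0 k))) => t /= ht.
  rewrite /= inWf /inW add0r; apply/negPn/negP => hn.
  by move: ht; rewrite /cc /cyc_conf -/k (negbTE hn) eqxx.
have hne : cc true <> cc false.
  move=> heq; move/eqP: neq; apply.
  apply: (@eq_from_nth _ (qv.1, qv.2).1); first by rewrite !size_map.
  move=> j; rewrite size_map => hj.
  rewrite (nth_map qv) // (nth_map qv) //.
  have hjk : (j <= k)%N by rewrite /k; lia.
  apply: (@eq_from_nth _ q); first by rewrite (hsize true) // (hsize false).
  move=> l; rewrite (hsize true) // => hl.
  by rewrite (claim true) // (claim false) // heq.
have := orth _ _ (hconf true) (hconf false) hne.
rewrite (col_inner_prod dq (hout true) (hout false)).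
apply/eqP/prodf_neq0 => j _.
rewrite !nbw (_ : - head 0 N + j%:Z + head 0 N = j%:Z); last by lia.
by rewrite hm; apply: hw.
Qed.


Lemma edge_of (c c' : int -> S) t m :
  dotv (delta (win c t m.+2)) (delta (win c' t m.+2)) != 0 ->
  H_edge m.+2 delta (win c t m.+1, win c' t m.+1) (win c (t + 1) m.+1, win c' (t + 1) m.+1).
Proof.
move=> hd.
exists (c t), (c' t), (c (t + m.+1%:Z)), (c' (t + m.+1%:Z)), (win c (t + 1) m), (win c' (t + 1) m).
have hr1 : forall d : int -> S, rcons (win d (t + 1) m) (d (t + m.+1%:Z)) = win d (t + 1) m.+1.
  by move=> d; rewrite win_rcons; congr (rcons _ (d _)); lia.
split; rewrite ?size_win ?hr1 -?win_cons //; lia.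
Qed.

Lemma dir2 : (forall p, q_cycle (size N) q delta p -> map fst p = map snd p) ->
  columns_orthogonal q N delta.
Proof.
move=> hcyc c c' hc hc' hne.
have [m hm] : exists m, size N = m.+2 by exists (size N - 2)%N; lia.
have [//|hnz] := eqVneq (col_inner q N delta c c') 0.
exfalso.
have [M hM] : exists M : nat, forall i, ([set i | c i != q] `|` [set i | c' i != q]) i -> (`|i| <= M)%N.
  by apply: fin_bound; rewrite finite_setU; split.
have hq : forall t, (M < `|t|)%N -> c t = q /\ c' t = q.
  move=> t ht; split; apply/eqP; apply/negPn/negP => hn.
    by have := hM t (or_introl hn); lia.
  by have := hM t (or_intror hn); lia.
have [t0 ht0] : exists t0 : int, t0 = - (M%:Z) - (m.+1)%:Z by eexists.
have [len hlen] : exists len : nat, len = (2 * M + 1 + m.+1)%N by eexists.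
have hout : forall d : int -> S, (forall t, (M < `|t|)%N -> d t = q) ->
    forall i, ~~ inW (t0 - head 0 N) len i -> nbhd N d i = nseq (size N) q.
  move=> d hd i hi; rewrite nbw; apply: win_q => l hl; apply: hd.
  by move: hi; rewrite /inW; lia.
rewrite (col_inner_prod dq (hout c (fun t h => (hq t h).1)) (hout c' (fun t h => (hq t h).2))) in hnz.
move/prodf_neq0: hnz => hnz.
pose p := [seq (win c (t0 + j%:Z) m.+1, win c' (t0 + j%:Z) m.+1) | j <- iota 0 len.+1].
have hp : q_cycle (size N) q delta p.
  have e1 : (m.+2 - 1 = m.+1)%N by lia.
  rewrite /q_cycle /q_vertex hm e1; split.
  - by rewrite size_map size_iota; lia.
  - move=> i; rewrite size_map size_iota => hi.
    have hi1 : (i < len.+1)%N by lia.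
    rewrite !(nth_map 0%N) ?size_iota ?nth_iota //.
    rewrite !add0n (_ : t0 + i.+1%:Z = t0 + i%:Z + 1); last by lia.
    apply: edge_of.
    have hi' : (i < len)%N by lia.
    have := hnz (Ordinal hi') isT; rewrite !nbw hm /=.
    by rewrite (_ : t0 - head 0 N + i%:Z + head 0 N = t0 + i%:Z) //; lia.
  - rewrite /p (nth_map 0%N) ?size_iota // nth_iota //.
    by congr pair; apply: win_q => l hl; [apply: (hq _ _).1|apply: (hq _ _).2]; lia.
  - rewrite /p size_map size_iota (nth_map 0%N) ?size_iota // nth_iota //.
    by congr pair; apply: win_q => l hl; [apply: (hq _ _).1|apply: (hq _ _).2]; lia.
have heq := hcyc p hp.
rewrite /p -!map_comp in heq.
apply: hne; apply/funext => t.
have [ht|ht] := leqP `|t| M; last by rewrite (hq t ht).1 (hq t ht).2.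
have hj : (absz (t - t0)%R <= len)%N by lia.
have := congr1 (fun s => nth [::] s (absz (t - t0)%R)) heq.
rewrite !(nth_map 0%N) ?size_iota ?nth_iota //= => hwin.
have := congr1 (fun s => nth q s 0%N) hwin.
by rewrite !nth_win // addr0 add0n (_ : t0 + (absz (t - t0)%R)%:Z = t) //; lia.
Qed.

Theorem lemma5' :
  (columns_orthogonal q N delta <->
   forall p : seq (seq S * seq S), q_cycle (size N) q delta p ->
     map fst p = map snd p).
Proof. by split; [apply: dir1|apply: dir2]. Qed.

End Main.

Theorem lemma5 (R : realType) (S : finType) (q : S) (N : seq int)
    (delta : seq S -> S -> R[i]) :
  is_LQCA q N delta -> is_simple N -> (2 <= size N)%N ->
  (columns_orthogonal q N delta <->
   forall p : seq (seq S * seq S), q_cycle (size N) q delta p ->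
     map fst p = map snd p).
Proof.
move=> hL hs hr; exact: (lemma5' hL hs hr).
Qed.
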